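(* There exists a property $\mathcal{P}$ such that for all $\varepsilon\in(0,1)$ and $t\le \mathrm{poly}(\varepsilon)\cdot\frac{n}{\log n}$, the property $\mathcal{P}$ is $\varepsilon$-testable using $\mathrm{poly}(\frac1\varepsilon)$ queries in the $t$-online-corruption model. However, for all $\alpha=\Omega\left(\frac{1}{\log\log n}\right)$ such that $\alpha+\varepsilon<1$, every $\alpha$-offline-erasure-resilient $\varepsilon$-tester for $\mathcal{P}$ requires $\widetilde{\Omega}(\log n)$ queries on inputs of length $n$.
   Context: $\widetilde{\Omega}(f)$ hides $\mathrm{polylog}(f)$ factors. A property is a set $\mathcal{P}=\bigcup_n\mathcal{P}_n$ where $\mathcal{P}_n$ consists of strings of length $n$ over an alphabet $\Sigma$. The relative Hamming distance of $x,y\in\Sigma^n$ is $\delta_H(x,y)=\Pr_{i\sim[n]}[x_i\neq y_i]$; $x$ is $\varepsilon$-far from $\mathcal{P}$ if $\delta_H(x,y)\ge\varepsilon$ for all $y\in\mathcal{P}_n$. An $\varepsilon$-tester accepts with probability $\ge 2/3$ inputs in $\mathcal{P}$ and rejects with probability $\ge 2/3$ inputs $\varepsilon$-far from $\mathcal{P}$. In the $t$-online-corruption model, the input is accessed through an adversarial oracle which initially answers query $i$ with $x_i$; after answering each query it may replace the values at up to $t$ indices by arbitrary symbols of $\Sigma$ (used for future answers), with choices depending on the input, past queries and the algorithm's code but not on future coin tosses; the tester must satisfy the tester guarantee (with respect to the original $x$) against every such oracle. Offline erasures: a string in $(\Sigma\cup\{\perp\})^n$ is $\alpha$-erased if at most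 an $\alpha$ fraction of its symbols are $\perp$; a completion agrees with it on all non-erased positions. An $\alpha$-offline-erasure-resilient $\varepsilon$-tester, given query access to an $\alpha$-erased $x$, accepts with probability $\ge 2/3$ if some completion of $x$ lies in $\mathcal{P}$ and rejects with probability $\ge 2/3$ if every completion is $\varepsilon$-far from $\mathcal{P}$. *)

(* Defs.v *)
From Stdlib Require Import Reals.
From mathcomp Require Import all_boot.

Set Implicit Arguments.
Unset Strict Implicit.
Unset Printing Implicit Defensive.

Definition word (S : Type) (n : nat) := 'I_n -> S.

Definition property (S : Type) := forall n : nat, word S n -> Prop.

Definition hdist (S : eqType) (n : nat) (x y : word S n) : nat :=
  #|[set i : 'I_n | x i != y i]|.

Definition far (S : eqType) (P : property S) (eps : R) (n : nat) (x : word S n) : Prop :=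
  forall y : word S n, P n y -> Rle eps (Rdiv (INR (hdist x y)) (INR n)).

(* A randomized adaptive query algorithm on inputs of length n, receiving
   answers in A: it tosses [coins] fair coins, makes exactly [nqueries]
   queries, the next query index being a function of the coins and the
   answers received so far, and finally accepts or rejects as a function of
   the coins and all answers. *)
Record tester (n : nat) (A : Type) := Tester {
  coins : nat;
  nqueries : nat;
  tquery : {ffun 'I_coins -> bool} -> seq A -> 'I_n;
  tdecide : {ffun 'I_coins -> bool} -> seq A -> bool
}.

(* Execution against an oracle whose answer to query i may depend on the
   history hq of previous queries. Returns the sequence of answers. *)
Fixpoint exec (n : nat) (A : Type) (k : nat) (qf : seq A -> 'I_n)
  (orc : seq 'I_n -> 'I_n -> A) (hq : seq 'I_n) (ha : seq A) : seq A :=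
  match k with
  | 0 => ha
  | k'.+1 =>
      let i := qf ha in
      exec k' qf orc (rcons hq i) (rcons ha (orc hq i))
  end.

Definition outcome (n : nat) (A : Type) (T : tester n A)
  (orc : seq 'I_n -> 'I_n -> A) (r : {ffun 'I_(coins T) -> bool}) : bool :=
  @tdecide n A T r (exec (nqueries T) (@tquery n A T r) orc [::] [::]).

Arguments outcome [n A] T orc r.

Definition accepts_whp (n : nat) (A : Type) (T : tester n A)
  (orc : seq 'I_n -> 'I_n -> A) : Prop :=
  2 * 2 ^ coins T <= 3 * #|[set r : {ffun 'I_(coins T) -> bool} | outcome T orc r]|.

Definition rejects_whp (n : nat) (A : Type) (T : tester n A)
  (orc : seq 'I_n -> 'I_n -> A) : Prop :=
  2 * 2 ^ coins T <= 3 * #|[set r : {ffun 'I_(coins T) -> bool} | ~~ outcome T orc r]|.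

(* t-online-corruption adversary for input x: adv h is the current (possibly
   corrupted) string after the queries h have been answered. Its choices
   depend on x, the past queries (hence past answers) and (since it is
   quantified after the tester) the algorithm's code, but not on coins. *)
Definition online_adversary (S : eqType) (n t : nat) (x : word S n)
  (adv : seq 'I_n -> word S n) : Prop :=
  (forall i, adv [::] i = x i) /\
  (forall (h : seq 'I_n) (i : 'I_n), hdist (adv h) (adv (rcons h i)) <= t).

Definition online_oracle (S : Type) (n : nat) (adv : seq 'I_n -> word S n)
  : seq 'I_n -> 'I_n -> S := fun hq i => adv hq i.

Definition online_tester (S : eqType) (P : property S) (eps : R) (t n : nat)
  (T : tester n S) : Prop :=
  forall (x : word S n) (adv : seq 'I_n -> word S n),
    online_adversary t x adv ->
    (P n x -> accepts_whp T (online_oracle adv)) /\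
    (far P eps x -> rejects_whp T (online_oracle adv)).

(* Strings over S \cup {bot}; None plays the role of bot. *)
Definition erased_word (S : Type) (n : nat) := 'I_n -> option S.

Definition alpha_erased (S : eqType) (n : nat) (alpha : R) (w : erased_word S n) : Prop :=
  Rle (INR #|[set i : 'I_n | w i == None]|) (Rmult alpha (INR n)).

Definition completion (S : Type) (n : nat) (w : erased_word S n) (y : word S n) : Prop :=
  forall (i : 'I_n) (s : S), w i = Some s -> y i = s.

Definition erased_oracle (S : Type) (n : nat) (w : erased_word S n)
  : seq 'I_n -> 'I_n -> option S := fun _ i => w i.

Definition er_tester (S : eqType) (P : property S) (alpha eps : R) (n : nat)
  (T : tester n (option S)) : Prop :=
  forall w : erased_word S n, alpha_erased alpha w ->
    ((exists y, completion w y /\ P n y) -> accepts_whp T (erased_oracle w)) /\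
    ((forall y, completion w y -> far P eps y) -> rejects_whp T (erased_oracle w)).

(* Main.v *)
Require Import Defs.
From Stdlib Require Import Reals.
From Stdlib Require Import Lra ZArith Lia.
From mathcomp Require Import all_boot.
From mathcomp Require Import all_algebra.
From mathcomp Require Import zify.
Local Open Scope R_scope.

Module ModG.
Local Open Scope nat_scope.
Unset Implicit Arguments.
Local Open Scope R_scope.

Lemma bernR (x : R) (s : nat) : -1 <= x -> 1 + INR s * x <= (1 + x) ^ s.
Proof.
move=> Hx; elim: s => [|s IH]; first by simpl; lra.
rewrite S_INR; change ((1 + x) ^ s.+1) with ((1 + x) * (1 + x) ^ s).
have H0 : 0 <= 1 + x by lra.
have : (1 + INR s * x) * (1 + x) <= (1 + x) ^ s * (1 + x) by apply: Rmult_le_compat_r.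
have : 0 <= INR s * x * x.
  rewrite Rmult_assoc; apply: Rmult_le_pos; [apply: pos_INR | nra].
nra.
Qed.

Lemma geom_third (u : R) (s : nat) : 0 < u < 1 -> 2 < INR s * u -> (1 - u) ^ s <= / 3.
Proof.
move=> Hu Hs.
have H1 : 1 + INR s * u <= (1 + u) ^ s by apply: bernR; lra.
have H2 : (1 - u) ^ s * (1 + u) ^ s <= 1.
  rewrite -Rpow_mult_distr.
  have : 0 <= (1 - u) * (1 + u) <= 1 by split; nra.
  move=> H; have := pow_incr _ _ s H; rewrite pow1; lra.
have H3 : 0 <= (1 - u) ^ s by apply: pow_le; lra.
have H4 : 3 < (1 + u) ^ s by lra.
apply: (Rmult_le_reg_r 3); first lra.
rewrite Rinv_l; last lra.
nra.
Qed.

Lemma INR_up_nat (x : R) : 0 < x ->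
  x < INR (Z.to_nat (up x)) <= x + 1.
Proof.
move=> Hx; have [H1 H2] := archimed x.
have Hz : Z.le 0 (up x).
  apply: le_IZR; lra.
rewrite INR_IZR_INZ Z2Nat.id //; lra.
Qed.

Lemma ln_ge1 (n : nat) : (3 <= n)%N -> 1 <= ln (INR n).
Proof.
move=> Hn.
have H3 : INR 3 <= INR n by apply: le_INR; apply/leP.
simpl in H3.
have He := exp_le_3.
rewrite -[X in X <= _](ln_exp 1).
have : exp 1 <= INR n by lra.
case/Rle_lt_or_eq => [H|->]; last lra.
apply: Rlt_le; apply: ln_increasing => //; apply: exp_pos.
Qed.

Lemma ln2_lt1 : ln 2 < 1.
Proof.
have := exp_ineq1 1 (ltac:(lra)).
move=> H; rewrite -[X in _ < X](ln_exp 1).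
apply: ln_increasing; lra.
Qed.

Lemma upper_params (eps : R) (n t : nat) : 0 < eps < 1 -> (0 < n)%N ->
  INR t <= / 500 * eps ^ 2 * INR n / ln (INR n) ->
  let s := Z.to_nat (up (8 / eps)) in
  (6 * s * s * t <= n)%N /\ 8 < INR s * eps /\ INR s * eps <= 9.
Proof.
move=> He Hn Ht s.
have H8 : 0 < 8 / eps by apply: Rdiv_lt_0_compat; lra.
have [Hs1 Hs2] := INR_up_nat (8 / eps) H8.
rewrite -/s in Hs1 Hs2.
have Hse1 : 8 < INR s * eps.
  have : 8 / eps * eps = 8 by field; lra.
  nra.
have Hse2 : INR s * eps <= 9.
  have : 8 / eps * eps = 8 by field; lra.
  nra.
split=> //.
have [t0|tpos] := posnP t; first by rewrite t0 muln0.
have HtR : 1 <= INR t by apply: (le_INR 1); apply/leP.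
have Hn3 : (3 <= n)%N.
  rewrite leqNgt; apply/negP => Hlt.
  have : n = 1%N \/ n = 2%N by lia.
  case=> En; rewrite En in Ht.
  - move: Ht; change (INR 1) with 1; rewrite ln_1 /Rdiv Rinv_0; lra.
  - have := ln_lt_2; move: Ht; change (INR 2) with 2.
    move=> Ht Hl.
    have Hl0 : 0 < ln 2 by lra.
    have : INR t * ln 2 <= / 500 * eps ^ 2 * 2.
      apply: (Rmult_le_reg_r (/ ln 2)); first by apply: Rinv_0_lt_compat.
      rewrite Rmult_assoc Rinv_r; lra.
    have : eps ^ 2 < 1 by simpl; nra.
    nra.
have Hl := ln_ge1 n Hn3.
have HnR : 0 < INR n by apply: lt_0_INR; apply/ltP.
have Ht2 : INR t <= / 500 * eps ^ 2 * INR n.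
  apply: (Rle_trans _ _ _ Ht).
  have : 0 <= / 500 * eps ^ 2 * INR n.
    apply: Rmult_le_pos; last lra.
    apply: Rmult_le_pos; [lra | apply: pow_le; lra].
  move=> H0; rewrite /Rdiv.
  have : / ln (INR n) <= 1.
    rewrite -Rinv_1; apply: Rinv_le_contravar; lra.
  nra.
apply/leP; apply: INR_le.
rewrite !mult_INR.
have Hs0 : 0 <= INR s by apply: pos_INR.
have : INR s * INR s * INR t <= INR s * INR s * (/ 500 * eps ^ 2 * INR n).
  apply: Rmult_le_compat_l => //; nra.
have : (INR s * eps) ^ 2 <= 81 by simpl; nra.
simpl. nra.
Qed.

Lemma INR_expn (m k : nat) : INR (m ^ k)%N = INR m ^ k.
Proof.
elim: k => [|k IH]; first by rewrite expn0.
by rewrite expnS mult_INR IH.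
Qed.

Lemma reject_arith (eps : R) (n s t d : nat) : 0 < eps < 1 -> (0 < n)%N ->
  (6 * s * s * t <= n)%N -> 8 < INR s * eps -> eps * INR n <= INR d -> (d <= n)%N ->
  (3 * (2 ^ n - (d - s * t) * (2 ^ n %/ n)) ^ s <= (2 ^ n) ^ s)%N.
Proof.
move=> He Hn H6 Hse Hd Hdn.
set M := (2 ^ n)%N; set q := (M %/ n)%N.
have nM : (n < M)%N by rewrite /M ltn_expl.
have Hq1 : (n * q <= M)%N by rewrite mulnC /q leq_divM.
have Hq2 : (M < q.+1 * n)%N by rewrite /q ltn_ceil.
have HnR : 0 < INR n by apply: lt_0_INR; apply/ltP.
have Hs0 : 0 < INR s by nra.
have H6R : 6 * INR s * INR s * INR t <= INR n.
  have := le_INR _ _ (elimT leP H6); rewrite !mult_INR.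
  by change (INR 6) with (1 + 1 + 1 + 1 + 1 + 1); lra.
have HtR : 0 <= INR t by apply: pos_INR.
have Hst : INR s * INR t * 48 <= eps * INR n by nra.
have HstN : (s * t <= d)%N.
  apply/leP; apply: INR_le; rewrite mult_INR; nra.
have Hq1R : INR n * INR q <= INR M by rewrite -mult_INR; apply: le_INR; apply/leP.
have Hq2R : INR M <= 2 * INR n * INR q.
  have : (M <= 2 * n * q)%N.
    apply: leq_trans (ltnW Hq2) _; rewrite mulSn.
    have : (1 <= q)%N.
      rewrite lt0n; apply/eqP => q0; move: Hq2; rewrite q0 mul1n => Hc.
      by move: (ltn_trans Hc nM); rewrite ltnn.
    nia.
  move/leP/le_INR; rewrite !mult_INR; by change (INR 2) with (1 + 1); lra.
have Hhi : ((d - s * t) * q <= M)%N by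
  apply: leq_trans Hq1; rewrite leq_mul2r (leq_trans (leq_subr _ _) Hdn) orbT.
set hi := (M - (d - s * t) * q)%N.
have HhiR : INR hi <= INR M * (1 - eps / 4).
  rewrite /hi minus_INR; last by apply/leP.
  rewrite mult_INR minus_INR; last by apply/leP.
  rewrite mult_INR.
  have Hq0 : 0 <= INR q by apply: pos_INR.
  have : (eps * INR n / 2) * INR q <= (INR d - INR s * INR t) * INR q.
    apply: Rmult_le_compat_r => //; nra.
  nra.
have Hhi0 : 0 <= INR hi by apply: pos_INR.
have HM0 : 0 < INR M by apply: lt_0_INR; apply/ltP; rewrite /M expn_gt0.
have Hpow : INR hi ^ s <= (INR M * (1 - eps / 4)) ^ s by apply: pow_incr; lra.
rewrite Rpow_mult_distr in Hpow.
have Hg : (1 - eps / 4) ^ s <= / 3 by apply: geom_third; lra.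
have HMs : 0 <= INR M ^ s by apply: pow_le; lra.
apply/leP; apply: INR_le; rewrite mult_INR (INR_expn hi) (INR_expn M).
change (INR 3) with (1 + 1 + 1).
have : INR M ^ s * (1 - eps / 4) ^ s <= INR M ^ s * / 3 by apply: Rmult_le_compat_l.
have : INR M ^ s * / 3 * 3 = INR M ^ s by field.
nra.
Qed.

Lemma sq_le_pow (k : nat) : ((k.+1) * (k.+1) <= 4 * 2 ^ k)%N.
Proof.
elim: k => [|k IH] //.
rewrite expnS.
have [Hk|Hk] := leqP k 1.
  by move: Hk IH; case: k => [|[|k]].
have : (k.+2 * k.+2 <= 2 * (k.+1 * k.+1))%N by nia.
move: IH; move: (2 ^ k)%N => P; nia.
Qed.

Lemma INR_big (x : R) : exists N : nat, forall n, (N <= n)%N -> x <= INR n.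
Proof.
exists (Z.to_nat (up (Rabs x + 1))) => n Hn.
have [H1 _] := INR_up_nat (Rabs x + 1) (ltac:(have := Rabs_pos x; lra)).
have := le_INR _ _ (elimT leP Hn).
have := Rle_abs x; lra.
Qed.

Lemma lower_params (eps c1 : R) : 0 < eps < 1 -> 0 < c1 ->
  exists n0 : nat, forall n : nat, (n0 <= n)%N -> forall alpha : R,
    c1 / ln (ln (INR n)) <= alpha ->
    (0 < n)%N /\ 1 <= alpha * INR n /\
    eps * INR n <= INR (n.-1 - (trunc_log 2 n).+1) /\
    ln (INR n) <= INR ((trunc_log 2 n).+1).
Proof.
move=> He Hc.
have [N1 HN1] := INR_big (4 / (c1 * c1)).
have [N2 HN2] := INR_big (16 / ((1 - eps) * (1 - eps))).
exists (maxn 16 (maxn N1 N2)) => n Hn alpha Ha.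
have n16 : (16 <= n)%N by move: Hn; rewrite !geq_max => /andP [].
have Hn1 : 4 / (c1 * c1) <= INR n by apply: HN1; move: Hn; rewrite !geq_max => /and3P [].
have Hn2 : 16 / ((1 - eps) * (1 - eps)) <= INR n by apply: HN2; move: Hn; rewrite !geq_max => /and3P [].
have npos : (0 < n)%N by apply: leq_trans n16.
have nR16 : INR 16 <= INR n by apply: le_INR; apply/leP.
change (INR 16) with (1+1+1+1+1+1+1+1+1+1+1+1+1+1+1+1) in nR16.
set L := trunc_log 2 n.
have [HL1 HL2] := andP (trunc_log_bounds (isT : (1 < 2)%N) npos).
rewrite -/L in HL1 HL2.
have Hsq : (L.+1 * L.+1 <= 4 * n)%N.
  apply: leq_trans (sq_le_pow L) _; by rewrite leq_mul2l HL1 orbT.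
have HsqR : (INR L + 1) * (INR L + 1) <= 4 * INR n.
  have := le_INR _ _ (elimT leP Hsq); rewrite !mult_INR S_INR.
  by change (INR 4) with (1+1+1+1); lra.
have HL0 : 0 <= INR L by apply: pos_INR.
have Hc1 : INR L + 1 <= c1 * INR n.
  have : 4 <= c1 * c1 * INR n.
    have : 4 / (c1 * c1) * (c1 * c1) = 4 by field; lra.
    have : 0 < c1 * c1 by nra.
    nra.
  move=> H4.
  have HnR : 0 < INR n by lra.
  have H5 : 4 * INR n <= (c1 * INR n) * (c1 * INR n) by nra.
  have H6 : (INR L + 1) * (INR L + 1) <= (c1 * INR n) * (c1 * INR n) by lra.
  have H7 : 0 < c1 * INR n by nra.
  nra.
have He1 : INR L + 2 <= (1 - eps) * INR n.
  have : 16 <= (1 - eps) * (1 - eps) * INR n.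
    have : 16 / ((1 - eps) * (1 - eps)) * ((1 - eps) * (1 - eps)) = 16 by field; lra.
    have : 0 < (1 - eps) * (1 - eps) by nra.
    nra.
  move=> H4.
  have HnR : 0 < INR n by lra.
  have H5 : 16 * INR n <= ((1 - eps) * INR n) * ((1 - eps) * INR n) by nra.
  have H6 : (INR L + 2) * (INR L + 2) <= 4 * ((INR L + 1) * (INR L + 1)) by nra.
  have H7 : 0 < (1 - eps) * INR n by nra.
  nra.
have HlnL : ln (INR n) <= INR L.+1.
  have H2 : INR n < 2 ^ L.+1.
    have := lt_INR _ _ (elimT ltP HL2); rewrite INR_expn.
    by change (INR 2) with 2.
  have := ln_increasing (INR n) (2 ^ L.+1) (ltac:(lra)) H2.
  rewrite ln_pow; last lra.
  have := ln2_lt1; have := ln_lt_2; have : 0 <= INR L.+1 by apply: pos_INR.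
  nra.
split=> //; split; last split => //.
- have Hln1 : 1 < ln (INR n).
    rewrite -[X in X < _](ln_exp 1); apply: ln_increasing; first exact: exp_pos.
    have := exp_le_3; lra.
  have Hll0 : 0 < ln (ln (INR n)).
    rewrite -ln_1; apply: ln_increasing; lra.
  have Hll : 1 + ln (ln (INR n)) < ln (INR n).
    have := exp_ineq1 (ln (ln (INR n))) (ltac:(lra)); rewrite exp_ln; lra.
  rewrite S_INR in HlnL.
  have Hc1n : ln (ln (INR n)) <= c1 * INR n by lra.
  have : c1 / ln (ln (INR n)) * ln (ln (INR n)) = c1 by field; lra.
  move=> HA.
  have HnR : 0 < INR n by lra.
  move: HA Ha; move: (c1 / ln (ln (INR n))) => A HA Ha.
  have H1 : (A * INR n - 1) * ln (ln (INR n)) >= 0 by nra.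
  have H2 : A * INR n >= 1.
    case: (Rlt_le_dec (A * INR n) 1) => // H; nra.
  nra.
- have HL2n : (L.+2 <= n)%N.
    apply/leP; apply: INR_le; rewrite !S_INR; nra.
  have -> : (n.-1 - L.+1 = n - L.+2)%N by lia.
  rewrite minus_INR; last exact/leP.
  rewrite !S_INR; lra.
Qed.

End ModG.
Import ModG.

Module ModA.
Local Open Scope nat_scope.
Import GRing.Theory.
Set Implicit Arguments.
Unset Strict Implicit.
Unset Printing Implicit Defensive.
Local Open Scope ring_scope.

Fixpoint qseq (n : nat) (A : Type) (k : nat) (qf : seq A -> 'I_n)
  (w : 'I_n -> A) (ha : seq A) : seq 'I_n :=
  match k with
  | 0 => [::]
  | k'.+1 => qf ha :: qseq k' qf w (rcons ha (w (qf ha)))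
  end.

Lemma size_qseq n A k qf (w : 'I_n -> A) ha : size (qseq k qf w ha) = k.
Proof. by elim: k ha => //= k IH ha; rewrite IH. Qed.

Lemma exec_agree n A k qf (w w' : 'I_n -> A) hq ha :
  (forall i, i \in qseq k qf w ha -> w' i = w i) ->
  exec k qf (fun _ i => w' i) hq ha = exec k qf (fun _ i => w i) hq ha /\
  qseq k qf w' ha = qseq k qf w ha.
Proof.
elim: k hq ha => [|k IH] hq ha //= H.
have E : w' (qf ha) = w (qf ha) by apply: H; rewrite inE eqxx.
have H' : forall i, i \in qseq k qf w (rcons ha (w (qf ha))) -> w' i = w i.
  by move=> i Hi; apply: H; rewrite inE Hi orbT.
rewrite E; have [-> ->] := IH (rcons hq (qf ha)) _ H'.
by [].
Qed.

Lemma interp (F : fieldType) (g : F -> F) (s : seq F) :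
  exists q : {poly F}, (size q <= size (undup s))%N /\
     forall z, z \in s -> q.[z] = g z.
Proof.
elim: s => [|z s [q [Hs Hq]]]; first by exists 0; rewrite size_poly0.
rewrite /=; case: ifP => zs.
  exists q; split=> // x; rewrite inE => /orP [/eqP -> |]; last exact: Hq.
  exact: Hq.
set Pi := \prod_(w <- undup s) ('X - w%:P).
have Piz : Pi.[z] != 0.
  rewrite /Pi horner_prod prodf_seq_neq0; apply/allP => w ws /=.
  rewrite hornerXsubC subr_eq0; apply: contraFN zs => /eqP ->.
  by rewrite -mem_undup.
exists (q + ((g z - q.[z]) / Pi.[z]) *: Pi); split.
  apply: (leq_trans (size_polyD _ _)); rewrite geq_max /=.
  rewrite (leq_trans Hs) //=; apply: (leq_trans (size_scale_leq _ _)).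
  by rewrite /Pi size_prod_XsubC.
move=> x; rewrite inE => /orP [/eqP -> |xs].
  rewrite hornerD hornerZ divfK // addrC subrK //.
rewrite hornerD hornerZ Hq //.
have -> : Pi.[x] = 0.
  apply/eqP; rewrite /Pi horner_prod prodf_seq_eq0; apply/hasP; exists x.
    by rewrite mem_undup.
  by rewrite /= hornerXsubC subrr.
by rewrite mulr0 addr0.
Qed.

Lemma card_exchange (I J : finType) (Phi : I -> J -> bool) :
  (\sum_i #|[set j | Phi i j]| = \sum_j #|[set i | Phi i j]|)%N.
Proof.
have E : forall (I J : finType) (Phi : I -> J -> bool) i,
    #|[set j | Phi i j]| = (\sum_j (Phi i j : nat))%N.
  move=> I0 J0 Ph i; rewrite -sum1_card big_mkcond /=.
  by apply: eq_bigr => j _; rewrite inE; case: (Ph i j).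
under eq_bigr do rewrite E.
rewrite exchange_big /=; apply: eq_bigr => j _.
by rewrite (E _ _ (fun j i => Phi i j)).
Qed.

Section Generic.
Variables (F : finFieldType) (m K' : nat) (pt : 'I_m -> F) (enc : F -> nat).
Hypothesis enc_inj : injective enc.
Local Notation K := K'.+1.

Definition polyf (f : {ffun 'I_K -> F}) : {poly F} := \poly_(j < K) f (inord j).

Lemma polyfB (f g : {ffun 'I_K -> F}) : polyf [ffun j => f j - g j] = polyf f - polyf g.
Proof.
apply/polyP => j; rewrite coefB !coef_poly; case: ltnP => // _.
  by rewrite ffunE.
by rewrite subr0.
Qed.

Lemma size_polyf (f : {ffun 'I_K -> F}) : (size (polyf f) <= K)%N.
Proof. exact: size_poly. Qed.

Definition wY (f : {ffun 'I_K -> F}) : erased_word nat m :=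
  fun i => if val i == 0%N then None else Some (enc (polyf f).[pt i]).
Definition wN (f : {ffun 'I_K -> F}) : erased_word nat m :=
  fun i => if val i == 0%N then None else Some (enc ((polyf f).[pt i] + pt i ^+ K)).

Definition interp_ok (S : seq 'I_m) (u : {ffun 'I_K -> F}) : bool :=
  all (fun i => (val i != 0%N) ==> ((polyf u).[pt i] == pt i ^+ K)) S.

Lemma interp_ex (S : seq 'I_m) : (size S <= K)%N -> exists u, interp_ok S u.
Proof.
move=> HS.
have [q [Hq1 Hq2]] := interp (fun z => z ^+ K) [seq pt i | i <- S & val i != 0%N].
exists [ffun j : 'I_K => q`_j]; rewrite /interp_ok.
have -> : polyf [ffun j : 'I_K => q`_j] = q.
  apply/polyP => j; rewrite coef_poly; case: ltnP => Hj.
    by rewrite ffunE inordK.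
  by rewrite nth_default // (leq_trans _ Hj) // (leq_trans Hq1) //
       (leq_trans (size_undup _)) // size_map size_filter (leq_trans (count_size _ _)).
apply/allP => i iS; apply/implyP => i0; apply/eqP; apply: Hq2.
by apply/mapP; exists i => //; rewrite mem_filter i0.
Qed.

Definition uS (S : seq 'I_m) : {ffun 'I_K -> F} :=
  odflt 0 [pick u : {ffun 'I_K -> F} | interp_ok S u].

Lemma uS_ok S : (size S <= K)%N -> interp_ok S (uS S).
Proof.
move=> /interp_ex [u Hu]; rewrite /uS; case: pickP => [v -> //|].
by move=> /(_ u); rewrite Hu.
Qed.

Variable T : tester m (option nat).
Hypothesis Tq : (nqueries T <= K)%N.

Section Coin.
Variable r : {ffun 'I_(coins T) -> bool}.

Definition Sf (f : {ffun 'I_K -> F}) := qseq (nqueries T) (tquery r) (wY f) [::].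
Definition sigma (f : {ffun 'I_K -> F}) : {ffun 'I_K -> F} := [ffun j => f j - uS (Sf f) j].

Lemma sigma_agree (f : {ffun 'I_K -> F}) : forall i, i \in Sf f -> wN (sigma f) i = wY f i.
Proof.
move=> i iS; rewrite /wN /wY; case: eqP => // /eqP i0.
have := @uS_ok (Sf f); rewrite {1}/Sf size_qseq => /(_ Tq) /allP /(_ i iS).
rewrite i0 /= => /eqP Hu.
by rewrite /sigma polyfB hornerD hornerN Hu addrNK.
Qed.

Lemma sigma_out (f : {ffun 'I_K -> F}) :
  outcome T (erased_oracle (wN (sigma f))) r = outcome T (erased_oracle (wY f)) r.
Proof.
rewrite /outcome /erased_oracle.
by have [-> _] := exec_agree [::] (sigma_agree (f:=f)).
Qed.

Lemma sigma_inj : injective sigma.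
Proof.
move=> f1 f2 E.
have [_ E1] := exec_agree [::] (sigma_agree (f:=f1)).
have [_ E2] := exec_agree [::] (sigma_agree (f:=f2)).
have ES : Sf f1 = Sf f2 by rewrite /Sf -E1 -E2 E.
apply/ffunP => j; have := congr1 (fun g : {ffun 'I_K -> F} => g j) E.
by rewrite !ffunE ES => /addIr.
Qed.

Lemma count_le :
  (#|[set f | outcome T (erased_oracle (wY f)) r]| <=
   #|[set g | outcome T (erased_oracle (wN g)) r]|)%N.
Proof.
rewrite -(card_imset _ sigma_inj); apply: subset_leq_card.
apply/subsetP => g /imsetP [f]; rewrite !inE => Hf ->.
by rewrite sigma_out.
Qed.
End Coin.

Lemma no_tester :
  (forall f, accepts_whp T (erased_oracle (wY f))) ->
  (forall f, rejects_whp T (erased_oracle (wN f))) -> False.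
Proof.
move=> HA HR.
set N := (2 ^ coins T)%N.
have cN : #|{ffun 'I_(coins T) -> bool}| = N by rewrite card_ffun card_bool card_ord.
pose a f := #|[set r | outcome T (erased_oracle (wY f)) r]|.
pose b f := #|[set r | outcome T (erased_oracle (wN f)) r]|.
pose c f := #|[set r | ~~ outcome T (erased_oracle (wN f)) r]|.
have bc : forall f, (b f + c f = N)%N.
  move=> f; rewrite -cN -(cardsC [set r | outcome T (erased_oracle (wN f)) r]).
  congr (_ + _)%N; apply: eq_card => r; by rewrite !inE.
have Hab : (\sum_f a f <= \sum_f b f)%N.
  rewrite /a /b (card_exchange (fun f r => outcome T (erased_oracle (wY f)) r)).
  rewrite (card_exchange (fun f r => outcome T (erased_oracle (wN f)) r)).
  apply: leq_sum => r _; exact: count_le.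
have Ha : (\sum_(f : {ffun 'I_K -> F}) (2 * N) <= \sum_f 3 * a f)%N.
  by apply: leq_sum => f _; apply: HA.
have Hc : (\sum_(f : {ffun 'I_K -> F}) (2 * N) <= \sum_f 3 * c f)%N.
  by apply: leq_sum => f _; apply: HR.
have Hbc : (\sum_f b f + \sum_f c f = \sum_(f : {ffun 'I_K -> F}) N)%N.
  by rewrite -big_split /=; apply: eq_bigr => f _; apply: bc.
rewrite -!big_distrr /= in Ha Hc.
move: Ha Hc Hbc Hab; rewrite sum_nat_const.
have : (0 < #|{ffun 'I_K -> F}|)%N by apply/card_gt0P; exists 0.
have : (0 < N)%N by rewrite expn_gt0.
move: (#|{ffun 'I_K -> F}|) (\sum_f a f) (\sum_f b f) (\sum_f c f) => x A B C.
rewrite /=.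
move=> HN Hx h1 h2 h3 h4.
have : (4 * (x * N) <= 3 * (x * N))%N.
  have -> : (4 * (x * N) = 2 * (x * N) + 2 * (x * N))%N by rewrite -mulnDl.
  rewrite (@leq_trans (3 * A + 3 * C)) //.
    rewrite leq_add //; by rewrite mulnC [(N * _)%N]mulnC in h1 h2 *.
  rewrite -h3 mulnDr leq_add2r leq_mul2l /=; exact: h4.
have : (0 < x * N)%N by rewrite muln_gt0 HN Hx.
move: (x * N)%N => y; lia.
Qed.
End Generic.

End ModA.
Import ModA.

Module ModB.
Local Open Scope nat_scope.
Unset Implicit Arguments.
Import GRing.Theory.
Local Open Scope ring_scope.

Definition pp (n : nat) : nat := sval (prime_above n).
Lemma pp_gt n : (n < pp n)%N. Proof. by rewrite /pp; case: prime_above. Qed.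
Lemma pp_prime n : prime (pp n). Proof. by rewrite /pp; case: prime_above. Qed.
Definition kk (n : nat) : nat := trunc_log 2 n.

Definition evalF (n : nat) (cs : seq nat) (i : 'I_n) : nat :=
  nat_of_ord ((\poly_(j < (kk n).+1) ((nth 0%N cs j)%:R : 'F_(pp n))).[(nat_of_ord i)%:R]).

Definition Pp : property nat := fun n x =>
  forall i j : 'I_n, nat_of_ord j = 0%N -> nat_of_ord i <> 0%N ->
    x i = evalF n (CodeSeq.decode (x j)) i.

Set Implicit Arguments.
Unset Strict Implicit.
Unset Printing Implicit Defensive.


Section Inst.
Variable n : nat.
Local Notation p := (pp n).
Local Notation F := ('F_p).
Local Notation K := (kk n).+1.
Definition ptn (i : 'I_n) : F := (nat_of_ord i)%:R.
Definition encF (x : F) : nat := nat_of_ord x.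

Lemma encF_inj : injective encF.
Proof. exact: val_inj. Qed.

Lemma valF (x : F) : ((nat_of_ord x)%:R : F) = x.
Proof.
apply: val_inj => /=; rewrite val_Fp_nat ?pp_prime // modn_small //.
by rewrite -{2}(Fp_cast (pp_prime n)) ltn_ord.
Qed.

Lemma ptn_inj : injective ptn.
Proof.
move=> i j E; apply: val_inj; have := congr1 (@nat_of_ord _) E.
rewrite /ptn !val_Fp_nat ?pp_prime // !modn_small //.
  exact: (ltn_trans (ltn_ord j) (pp_gt n)).
exact: (ltn_trans (ltn_ord i) (pp_gt n)).
Qed.

Lemma yes_inst (f : {ffun 'I_K -> F}) :
  exists y, completion (wY ptn encF f) y /\ Pp n y.
Proof.
pose cs := [seq encF (f j) | j <- enum 'I_K].
exists (fun i : 'I_n => if nat_of_ord i == 0%N then CodeSeq.code cs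
                        else encF (polyf f).[ptn i]).
split.
  move=> i s; rewrite /wY; case: eqP => // _ [<-] //.
move=> i j j0 i0; rewrite j0 /= ifN; last by apply/eqP.
rewrite CodeSeq.codeK /evalF; congr (nat_of_ord (_.[_])).
apply/polyP => l; rewrite !coef_poly; case: ltnP => // Hl.
rewrite /cs (nth_map ord0) ?size_enum_ord //.
rewrite /encF valF; congr (f _); apply: val_inj.
by rewrite /= nth_enum_ord // inordK.
Qed.

Lemma no_inst (f : {ffun 'I_K -> F}) (y z : word nat n) :
  completion (wN ptn encF f) y -> Pp n z ->
  (n.-1 - K <= hdist y z)%N.
Proof.
move=> Hy Hz.
have [n0|npos] := posnP n.
  by apply: leq_trans (leq0n _); rewrite n0.
pose j0 : 'I_n := Ordinal npos.
pose A := [set i : 'I_n | (nat_of_ord i != 0%N) && (y i == z i)].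
pose h : {poly F} := \poly_(j < K) ((nth 0%N (CodeSeq.decode (z j0)) j)%:R : F).
pose D := polyf f + 'X^K - h.
have sXh : size ('X^K - h) = K.+1.
  by rewrite size_polyDl size_polyXn // size_polyN ltnS size_poly.
have sD : size D = K.+1.
  by rewrite /D -addrA addrC size_polyDl sXh // ltnS size_poly.
have D0 : D != 0 by rewrite -size_poly_eq0 sD.
have : (size (map ptn (enum A)) < size D)%N.
  apply: max_poly_roots => //.
    apply/allP => x /mapP [i]; rewrite mem_enum inE => /andP [i0 /eqP E] ->.
    have := Hz i j0 erefl (elimN eqP i0); rewrite -E.
    have := Hy i; rewrite /wN ifN // => /(_ _ erefl) ->.
    rewrite /evalF => /encF_inj => E2.
    by rewrite /root /D !hornerE -/(ptn i) -E2 /h subrr.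
  by rewrite map_inj_uniq ?enum_uniq //; exact: ptn_inj.
rewrite size_map -cardE sD ltnS => HA.
have H1 : #|[set i : 'I_n | nat_of_ord i != 0%N]| = n.-1.
  have := cardsC [set i : 'I_n | nat_of_ord i == 0%N].
  have -> : #|[set i : 'I_n | nat_of_ord i == 0%N]| = 1%N.
    rewrite (_ : [set i : 'I_n | nat_of_ord i == 0%N] = [set j0]) ?cards1 //.
    apply/setP => i; rewrite !inE.
    by apply/eqP/eqP => [E|->] //; apply: val_inj.
  have -> : ~: [set i : 'I_n | nat_of_ord i == 0%N] = [set i | nat_of_ord i != 0%N].
    by apply/setP => i; rewrite !inE.
  rewrite card_ord; move: (#|_|) => X E; lia.
have H2 : [set i : 'I_n | nat_of_ord i != 0%N] \subset A :|: [set i | y i != z i].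
  apply/subsetP => i; rewrite !inE => ->; by case: (y i == z i).
have := subset_leq_card H2; rewrite H1 => H3.
have := cardsU A [set i | y i != z i].
have -> : hdist y z = #|[set i | y i != z i]| by []. lia. Qed.
End Inst.

End ModB.
Import ModB.

Module ModC.
Local Open Scope nat_scope.
Import GRing.Theory.
Set Implicit Arguments.
Unset Strict Implicit.
Unset Printing Implicit Defensive.
Local Open Scope R_scope.

Lemma erased_card n (npos : (0 < n)%N) (f : 'I_n -> option nat) :
  (forall i : 'I_n, (f i == None) = (nat_of_ord i == 0%N)) ->
  #|[set i | f i == None]| = 1%N.
Proof.
move=> Hf; rewrite (_ : [set i | f i == None] = [set Ordinal npos]) ?cards1 //.
apply/setP => i; rewrite !inE Hf; apply/eqP/eqP => [E|->] //; exact: val_inj.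
Qed.

Lemma lower_core n (alpha eps : R) (T : tester n (option nat)) :
  (0 < n)%N -> (1 <= alpha * INR n) ->
  (eps * INR n <= INR (n.-1 - (kk n).+1)) ->
  er_tester Pp alpha eps T -> ((kk n).+1 < nqueries T)%N.
Proof.
move=> npos Ha He HT; rewrite ltnNge; apply/negP => Hq.
apply: (@no_tester _ n (kk n) (@ptn n) (@encF n) T Hq).
- move=> f.
  have Her : alpha_erased alpha (wY (@ptn n) (@encF n) f).
    unfold alpha_erased; rewrite (@erased_card n npos (wY (@ptn n) (@encF n) f)).
      by rewrite /=; lra.
    by move=> i; rewrite /wY; change (\val i) with (nat_of_ord i); case: (nat_of_ord i == 0%N).
  have [H _] := HT _ Her; apply: H; exact: yes_inst.
- move=> f.
  have Her : alpha_erased alpha (wN (@ptn n) (@encF n) f).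
    unfold alpha_erased; rewrite (@erased_card n npos (wN (@ptn n) (@encF n) f)).
      by rewrite /=; lra.
    by move=> i; rewrite /wN; change (\val i) with (nat_of_ord i); case: (nat_of_ord i == 0%N).
  have [_ H] := HT _ Her; apply: H => y Hy z Hz.
    have Hd := no_inst Hy Hz.
    have nR : (0 < INR n) by apply: lt_0_INR; apply/ltP.
    apply: (Rmult_le_reg_r (INR n)) => //.
    rewrite /Rdiv Rmult_assoc Rinv_l; last by lra.
    rewrite Rmult_1_r; apply: (Rle_trans _ _ _ He); apply: le_INR; exact/leP.
Qed.

End ModC.
Import ModC.

Module ModD.
Local Open Scope nat_scope.
Set Implicit Arguments.
Unset Strict Implicit.
Unset Printing Implicit Defensive.

Section Split.
Variables a c : nat.
Definition lblock (r : {ffun 'I_(a + c) -> bool}) : {ffun 'I_a -> bool} :=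
  [ffun i => r (lshift c i)].
Definition rblock (r : {ffun 'I_(a + c) -> bool}) : {ffun 'I_c -> bool} :=
  [ffun i => r (rshift a i)].
Definition glue (uv : {ffun 'I_a -> bool} * {ffun 'I_c -> bool}) : {ffun 'I_(a + c) -> bool} :=
  [ffun i => match split i with inl j => uv.1 j | inr j => uv.2 j end].

Lemma LR_bij : bijective (fun r => (lblock r, rblock r)).
Proof.
exists glue.
  move=> r; apply/ffunP => i; rewrite ffunE.
  rewrite -[in RHS](splitK i); case: (split i) => j /=; by rewrite ffunE.
case=> u v /=; congr (_, _); apply/ffunP => i; rewrite !ffunE.
  by rewrite (unsplitK (inl _ i)).
by rewrite (unsplitK (inr _ i)).
Qed.

Lemma card_split (Phi : {ffun 'I_a -> bool} -> {ffun 'I_c -> bool} -> bool) :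
  #|[set r : {ffun 'I_(a + c) -> bool} | Phi (lblock r) (rblock r)]| =
  \sum_u #|[set v | Phi u v]|.
Proof.
have := on_card_preimset (onW_bij [set uv | Phi uv.1 uv.2] LR_bij).
move=> E.
have -> : #|[set r : {ffun 'I_(a + c) -> bool} | Phi (lblock r) (rblock r)]| =
  #|[set uv : {ffun 'I_a -> bool} * {ffun 'I_c -> bool} | Phi uv.1 uv.2]|.
  by rewrite -E; apply: eq_card => r; rewrite !inE.
rewrite -sum1dep_card.
rewrite (eq_bigl (fun p : {ffun 'I_a -> bool} * {ffun 'I_c -> bool} => true && Phi p.1 p.2)) //.
rewrite -(@pair_big_dep _ _ _ _ _ (fun _ => true) Phi (fun _ _ => 1)) /=.
by apply: eq_bigr => u _; rewrite sum1dep_card; apply: eq_card => v; rewrite inE.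
Qed.
End Split.

Definition modord n (npos : 0 < n) (v : nat) : 'I_n := Ordinal (ltn_pmod v npos).

Lemma card_mod_bounds n (npos : 0 < n) M (A : {set 'I_n}) :
  #|A| * (M %/ n) <= #|[set v : 'I_M | modord npos v \in A]| <= #|A| * (M %/ n).+1.
Proof.
apply/andP; split.
  case: (posnP M) => [M0|Mpos].
    by rewrite M0 div0n muln0.
  pose v0 : 'I_M := Ordinal Mpos.
  pose g (ij : 'I_n * 'I_(M %/ n)) : 'I_M := insubd v0 (ij.1 + ij.2 * n).
  have Hg : forall ij : 'I_n * 'I_(M %/ n), ij.1 + ij.2 * n < M.
    case=> i j /=; have := ltn_ord i; have := ltn_ord j; have := leq_divM M n.
    move=> H1 H2 H3.
    apply: (@leq_trans (n + j * n)); first by rewrite ltn_add2r.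
    apply: leq_trans H1; rewrite -mulSn leq_mul2r; apply/orP; right; exact: H2.
  have gv : forall ij, val (g ij) = ij.1 + ij.2 * n.
    by move=> ij; rewrite /g insubdK //; apply: Hg.
  rewrite -{1}(card_ord (M %/ n)) -cardsT -cardsX.
  rewrite -(@card_in_imset _ _ g); last first.
    move=> [i j] [i' j'] _ _ E; have := congr1 val E; rewrite !gv /= => E'.
    have Ei : i = i' :> nat.
      by have := congr1 (modn^~ n) E'; rewrite /= ![(_ + _ * n)]addnC !modnMDl !modn_small.
    have Ej : j = j' :> nat.
      rewrite Ei in E'; have := addnI E'; move/eqP; rewrite eqn_mul2r.
      case/orP => [/eqP n0|/eqP //]; by rewrite n0 in npos.
    by congr (_, _); apply: val_inj.
  apply: subset_leq_card; apply/subsetP => v /imsetP [[i j]] H ->.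
  move: H; rewrite in_setX => /andP [iA _]; rewrite inE.
  suff -> : modord npos (g (i, j)) = i by [].
  by apply: val_inj; rewrite /= gv /= addnC modnMDl modn_small.
pose h (v : 'I_M) : 'I_n * 'I_(M %/ n).+1 :=
  (modord npos v, Ordinal (leq_ltn_trans (leq_div2r n (ltnW (ltn_ord v))) (ltnSn _))).
have hinj : injective h.
  move=> v w E; apply: val_inj; change (nat_of_ord v = nat_of_ord w).
  rewrite (divn_eq v n) (divn_eq w n).
  have [E1 E2] := (congr1 (fun x => val x.1) E, congr1 (fun x => val x.2) E).
  by rewrite /= in E1 E2; rewrite E1 E2.
have Hs : [set h v | v in [set v : 'I_M | modord npos v \in A]] \subset
    setX A [set: 'I_(M %/ n).+1].
  apply/subsetP => x /imsetP [v]; rewrite inE => vA ->.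
  by rewrite in_setX vA inE.
by have := subset_leq_card Hs; rewrite cardsX cardsT card_ord card_imset.
Qed.

End ModD.
Import ModD.

Module ModE.
Local Open Scope nat_scope.
Set Implicit Arguments.
Unset Strict Implicit.
Unset Printing Implicit Defensive.

Lemma mkseqSl (T : Type) (f : nat -> T) k :
  mkseq f k.+1 = f 0 :: mkseq (fun j => f j.+1) k.
Proof.
rewrite /mkseq /= -[1]addn0 iotaDl -map_comp; congr (_ :: _).

Qed.

Lemma exec_size n (A : Type) k (Q : nat -> 'I_n) (orc : seq 'I_n -> 'I_n -> A) m (ha : seq A) :
  size ha = m ->
  exec k (fun a => Q (size a)) orc (mkseq Q m) ha =
  ha ++ mkseq (fun j => orc (mkseq Q (m + j)) (Q (m + j))) k.
Proof.
elim: k m ha => [|k IH] m ha Hs /=; first by rewrite cats0.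
rewrite Hs -mkseqS IH ?size_rcons ?Hs // mkseqSl addn0 cat_rcons.
by congr (_ ++ _ :: _); apply: eq_mkseq => j; rewrite addSnnS.
Qed.

Section Sampler.
Variables (n : nat) (npos : 0 < n) (b : nat).
Local Notation B := {ffun 'I_b -> bool}.
Definition i0 : 'I_n := Ordinal npos.
Definition pos (u : B) : 'I_n := modord npos (enum_rank u).

Lemma cardB : #|B| = 2 ^ b.
Proof. by rewrite card_ffun card_bool card_ord. Qed.

Lemma pos_bounds (A : {set 'I_n}) :
  #|A| * (2 ^ b %/ n) <= #|[set u : B | pos u \in A]| <= #|A| * (2 ^ b %/ n).+1.
Proof.
have E : #|[set u : B | pos u \in A]| = #|[set v : 'I_#|B| | modord npos v \in A]|.
  have Hb : bijective (@enum_rank B) by exists enum_val; [exact: enum_rankK | exact: enum_valK].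
  have := on_card_preimset (onW_bij [set v : 'I_#|B| | modord npos v \in A] Hb).
  move=> <-; apply: eq_card => u; by rewrite !inE.
rewrite E -cardB; exact: card_mod_bounds.
Qed.

Fixpoint cnt (s : nat) : nat := match s with 0 => 0 | s'.+1 => b + cnt s' end.

Fixpoint ps (s : nat) : {ffun 'I_(cnt s) -> bool} -> seq 'I_n :=
  match s return {ffun 'I_(cnt s) -> bool} -> seq 'I_n with
  | 0 => fun _ => [::]
  | s'.+1 => fun (r : {ffun 'I_(b + cnt s') -> bool}) =>
      pos (lblock r) :: @ps s' (rblock r)
  end.
Arguments ps : clear implicits.

Lemma size_ps s r : size (ps s r) = s.
Proof. by elim: s r => //= s IH r; rewrite IH. Qed.

Fixpoint good (G : seq 'I_n -> 'I_n -> bool) (H : seq 'I_n) (l : seq 'I_n) : bool :=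
  match l with
  | [::] => true
  | i :: l' => G H i && good G (rcons H i) l'
  end.

Lemma count_good G lo hi s H :
  (forall h, size h < size H + s -> lo <= #|[set u : B | G h (pos u)]| <= hi) ->
  lo ^ s <= #|[set r | good G H (ps s r)]| <= hi ^ s.
Proof.
elim: s H => [|s IH] H Hb.
  have -> : [set r | good G H (ps 0 r)] = setT by apply/setP => r; rewrite !inE.
  by rewrite !expn0 cardsT card_ffun card_bool card_ord.
have -> : #|[set r | good G H (ps s.+1 r)]| =
   \sum_u #|[set v | G H (pos u) && good G (rcons H (pos u)) (ps s v)]|.
  exact: (card_split (fun u v => G H (pos u) && good G (rcons H (pos u)) (ps s v))).
rewrite (bigID (fun u => G H (pos u))) /=.
rewrite [X in _ + X]big1 ?addn0; last first.
  move=> u /negbTE Gu; apply/eqP; rewrite cards_eq0; apply/eqP/setP => v.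
  by rewrite !inE Gu.
have Hterm : forall u, G H (pos u) ->
   lo ^ s <= #|[set v | G H (pos u) && good G (rcons H (pos u)) (ps s v)]| <= hi ^ s.
  move=> u Gu; rewrite (_ : [set v | _] = [set v | good G (rcons H (pos u)) (ps s v)]).
    apply: IH => h; rewrite size_rcons addSnnS; exact: Hb.
  by apply/setP => v; rewrite !inE Gu.
have HH : size H < size H + s.+1 by rewrite -[X in X < _]addn0 ltn_add2l.
have [Hlo Hhi] := andP (Hb H HH).
apply/andP; split.
  apply: (@leq_trans (\sum_(u | G H (pos u)) lo ^ s)).
    rewrite sum_nat_const expnS leq_mul2r.
    apply/orP; right; apply: (leq_trans Hlo).
    by apply/eq_leq; apply: eq_card => u; rewrite !inE.
  by apply: leq_sum => u Gu; have /andP [] := Hterm u Gu.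
apply: (@leq_trans (\sum_(u | G H (pos u)) hi ^ s)).
  by apply: leq_sum => u Gu; have /andP [] := Hterm u Gu.
rewrite sum_nat_const expnS leq_mul2r.
apply/orP; right; apply: leq_trans Hhi.
by apply/eq_leq; apply: eq_card => u; rewrite !inE.
Qed.

Lemma mkseq_good (orc : seq 'I_n -> 'I_n -> nat) (y : 'I_n -> nat) l H :
  (mkseq (fun j => orc (H ++ mkseq (nth i0 l) j) (nth i0 l j)) (size l) == map y l)
  = good (fun h i => orc h i == y i) H l.
Proof.
elim: l H => [|i l IH] H //=.
rewrite mkseqSl eqseq_cons /= cats0 -IH; congr (_ && (_ == _)).
apply: eq_mkseq => j; rewrite mkseqSl /=; by rewrite cat_rcons.
Qed.

Variable yw : nat -> 'I_n -> nat.

Definition Qf s (r : {ffun 'I_(cnt s) -> bool}) (j : nat) : 'I_n :=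
  if j is j'.+1 then nth i0 (ps s r) j' else i0.

Definition samp_tester s : tester n nat :=
  @Tester n nat (cnt s) s.+1 (fun r ha => Qf r (size ha))
    (fun r ans => behead ans == map (yw (head 0 ans)) (ps s r)).

Lemma outcome_good s (orc : seq 'I_n -> 'I_n -> nat) r :
  outcome (samp_tester s) orc r =
  good (fun h i => orc h i == yw (orc [::] i0) i) [:: i0] (ps s r).
Proof.
rewrite /outcome /=.
have := @exec_size n nat s.+1 (Qf r) orc 0 [::] erefl.
rewrite /= => ->; rewrite mkseqSl /=.
rewrite -mkseq_good size_ps; congr (_ == _).
by apply: eq_mkseq => j; rewrite mkseqSl.
Qed.
End Sampler.

End ModE.
Import ModE.

Module ModF.
Local Open Scope nat_scope.
Set Implicit Arguments.
Unset Strict Implicit.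
Unset Printing Implicit Defensive.

Section Hd.
Variables (n : nat).
Lemma hdist_sym (x y : word nat n) : hdist x y = hdist y x.
Proof. by apply: eq_card => i; rewrite !inE eq_sym. Qed.
Lemma hdist_ext (x x' y : word nat n) : (forall i, x i = x' i) -> hdist x y = hdist x' y.
Proof. by move=> E; apply: eq_card => i; rewrite !inE E. Qed.
Lemma hdist_tri (x y z : word nat n) : hdist x z <= hdist x y + hdist y z.
Proof.
rewrite /hdist; apply: leq_trans (leq_card_setU _ _) => /=.
apply: subset_leq_card; apply/subsetP => i; rewrite !inE.
by case: (x i =P y i) => [->|] //=; rewrite orbT.
Qed.
End Hd.

Lemma bern (M a s : nat) : a <= M -> M ^ s.+1 <= a ^ s.+1 + s.+1 * (M - a) * M ^ s.
Proof.
move=> aM; elim: s => [|s IH]; first by rewrite !expn1 mul1n muln1; lia.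
have XZ : a ^ s.+1 <= M ^ s.+1 by rewrite leq_exp2r.
rewrite (expnS M s.+1) (expnS a s.+1).
move: IH XZ; rewrite (expnS M s).
move: (a ^ s.+1) (M ^ s) => X Y IH XZ.
have E1 : M * (M * Y) <= M * (X + s.+1 * (M - a) * Y) by rewrite leq_mul2l IH orbT.
have E2 : M * X <= a * X + (M - a) * (M * Y).
  have -> : M * X = a * X + (M - a) * X by rewrite -mulnDl subnKC.
  by rewrite leq_add2l leq_mul2l XZ orbT.
nia.
Qed.

Lemma cnt_mul b s : cnt b s = b * s.
Proof. by elim: s => [|s IH] /=; rewrite ?muln0 // IH mulnS. Qed.

Lemma arith_acc M lo s beta : lo <= M -> M - lo <= beta -> 3 * s * beta <= M ->
  2 * M ^ s <= 3 * lo ^ s.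
Proof.
case: s => [|s'] Hlo Hml Hst; first by rewrite !expn0.
have := bern s' Hlo.
rewrite expnS.
move: (M ^ s') (lo ^ s'.+1) => P L Hbern.
have E : 3 * (s'.+1 * (M - lo) * P) <= M * P.
  rewrite mulnA leq_mul2r; apply/orP; right. apply: leq_trans Hst.
  by rewrite mulnA leq_mul2l Hml orbT.
nia.
Qed.

Section Online.
Variables (n : nat) (npos : 0 < n) (b : nat) (yw : nat -> 'I_n -> nat) (s t : nat).
Variables (x : word nat n) (adv : seq 'I_n -> word nat n).
Hypothesis Hadv : online_adversary t x adv.
Local Notation T := (@samp_tester n npos b yw s).
Local Notation y := (yw (x (i0 npos))).
Local Notation M := (2 ^ b).
Local Notation q := (2 ^ b %/ n).
Local Notation G := (fun h i => adv h i == y i).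
Local Notation acc := #|[set r | outcome T (online_oracle adv) r]|.

Lemma coins_card : 2 ^ coins T = M ^ s.
Proof. by rewrite /= cnt_mul expnM. Qed.

Lemma acc_eq : acc = #|[set r | good G [:: i0 npos] (@ps n npos b s r)]|.
Proof.
apply: eq_card => r; rewrite !inE outcome_good /online_oracle.
by have [-> _] := Hadv.
Qed.

Lemma drift h : hdist (adv [::]) (adv h) <= size h * t.
Proof.
elim/last_ind: h => [|h i IH].
  by rewrite mul0n leqn0 cards_eq0; apply/eqP/setP => i; rewrite !inE eqxx.
apply: leq_trans (hdist_tri _ (adv h) _) _.
rewrite size_rcons mulSn addnC leq_add //; exact: Hadv.2.
Qed.

Lemma Gcount h : #|[set u : {ffun 'I_b -> bool} | G h (pos npos u)]| =
  M - #|[set u : {ffun 'I_b -> bool} | pos npos u \in [set i | adv h i != y i]]|.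
Proof.
rewrite -(cardB b) -(cardsC [set u : {ffun 'I_b -> bool} | pos npos u \in [set i | adv h i != y i]]).
rewrite addKn; apply: eq_card => u; by rewrite !inE negbK.
Qed.

Lemma accept_bound : (forall i, y i = x i) -> 3 * s * (s * t * q.+1) <= M ->
  2 * 2 ^ coins T <= 3 * acc.
Proof.
move=> Hy Hst; rewrite coins_card acc_eq.
pose lo := M - s * t * q.+1.
have Hb : forall h, size h < size [:: i0 npos] + s ->
    lo <= #|[set u : {ffun 'I_b -> bool} | G h (pos npos u)]| <= M.
  move=> h Hh; rewrite Gcount leq_subr andbT leq_sub2l //.
  have := pos_bounds npos b [set i | adv h i != y i]; case/andP => _ H.
  apply: leq_trans H _; rewrite leq_mul2r; apply/orP; right.
  have -> : #|[set i | adv h i != y i]| = hdist (adv [::]) (adv h).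
    rewrite hdist_sym; apply: eq_card => i; rewrite !inE Hy; by have [-> _] := Hadv.
  apply: leq_trans (drift h) _; rewrite leq_mul2r; apply/orP; right.
  by rewrite /= add1n ltnS in Hh.
have /andP [H1 _] := count_good (G := fun h i => adv h i == y i) Hb.
apply: leq_trans (_ : 2 * M ^ s <= 3 * lo ^ s) _; last by rewrite leq_mul2l.
apply: (@arith_acc _ _ _ (s * t * q.+1)) => //; first by rewrite leq_subr.
by rewrite /lo leq_subLR addnC -leq_subLR.
Qed.

Lemma reject_count :
  acc <= (M - (hdist x y - s * t) * q) ^ s.
Proof.
rewrite acc_eq.
have Hb : forall h, size h < size [:: i0 npos] + s ->
    0 <= #|[set u : {ffun 'I_b -> bool} | G h (pos npos u)]| <= M - (hdist x y - s * t) * q.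
  move=> h Hh; rewrite Gcount leq_sub2l //.
  have := pos_bounds npos b [set i | adv h i != y i]; case/andP => H _.
  apply: leq_trans H; rewrite leq_mul2r; apply/orP; right.
  have Ht := hdist_tri x (adv h) y.
  have E : hdist x (adv h) = hdist (adv [::]) (adv h).
    apply: hdist_ext => i; by have [-> _] := Hadv.
  have := drift h; rewrite -E => Hd.
  have Hs : size h <= s by rewrite /= add1n ltnS in Hh.
  have : size h * t <= s * t by rewrite leq_mul2r Hs orbT.
  have -> : #|[set i | adv h i != y i]| = hdist (adv h) y by []. lia.
by have /andP [_ ->] := count_good (G := fun h i => adv h i == y i) Hb.
Qed.
End Online.

End ModF.
Import ModF.

Theorem corollary3p2 :
  exists (S : eqType) (P : property S),
    (* Upper bound in the online-corruption model. *)
    (exists (c : R) (d : nat) (C : R) (e : nat),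
       (0 < c) /\ (0 < C) /\
       forall eps : R, (0 < eps < 1) ->
       forall (n t : nat), (0 < n)%N ->
         (INR t <= c * eps ^ d * INR n / ln (INR n)) ->
         exists T : tester n S,
           online_tester P eps t T /\
           (INR (nqueries T) <= C * (/ eps) ^ e))
    /\
    (* Lower bound for offline-erasure-resilient testers. *)
    (forall eps : R, (0 < eps < 1) ->
     forall c1 : R, (0 < c1) ->
     exists (c2 : R) (k n0 : nat), (0 < c2) /\
       forall n : nat, (n0 <= n)%N ->
       forall alpha : R,
         (c1 / ln (ln (INR n)) <= alpha) ->
         (alpha + eps < 1) ->
         forall T : tester n (option S),
           er_tester P alpha eps T ->
           (c2 * ln (INR n) / (ln (ln (INR n))) ^ k <= INR (nqueries T))).
Proof.
exists nat, Pp; split.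
- exists (/ 500), 2%N, 10, 1%N; split; first lra; split; first lra.
  move=> eps He n t Hn Ht.
  have [H6 [Hse1 Hse2]] := upper_params eps n t He Hn Ht.
  move: H6 Hse1 Hse2; move: (Z.to_nat (up (8 / eps))) => s H6 Hse1 Hse2.
  pose yw (a : nat) (i : 'I_n) : nat :=
    if nat_of_ord i == 0%N then a else evalF n (CodeSeq.decode a) i.
  exists (samp_tester Hn n yw s); split.
  + move=> x adv Hadv; split.
    * move=> Px; apply: (accept_bound Hadv).
        move=> i; rewrite /yw; case: eqP => Hi.
          by congr x; apply: val_inj.
        by rewrite (Px i (i0 Hn)).
      have nM : (n < 2 ^ n)%N by rewrite ltn_expl.
      have Hq1 : (n * (2 ^ n %/ n) <= 2 ^ n)%N by rewrite mulnC leq_divM.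
      have Hq0 : (0 < 2 ^ n %/ n)%N by rewrite divn_gt0 // ltnW.
      set q := (2 ^ n %/ n)%N in Hq1 Hq0 *.
      have E1 : (3 * s * (s * t * q.+1) <= (6 * s * s * t) * q)%N.
        have E0 : (3 * s * (s * t * q.+1) <= 3 * s * (s * t * (2 * q)))%N.
          rewrite leq_mul2l; apply/orP; right; rewrite leq_mul2l; apply/orP; right; lia.
        apply: (leq_trans E0); apply: eq_leq; lia.
      apply: (leq_trans E1); apply: leq_trans Hq1.
      by rewrite leq_mul2r H6 orbT.
    * move=> Hfar; rewrite /rejects_whp.
      set y := yw (x (i0 Hn)).
      have Py : Pp n y.
        move=> i j Hj Hi; rewrite /y /yw.
        have -> : (nat_of_ord j == 0%N) by apply/eqP.
        by rewrite ifN //; apply/eqP.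
      have Hd := Hfar y Py.
      have HnR : 0 < INR n by apply: lt_0_INR; apply/ltP.
      have Hd' : eps * INR n <= INR (hdist x y).
        apply: (Rmult_le_reg_r (/ INR n)); first by apply: Rinv_0_lt_compat.
        rewrite Rmult_assoc Rinv_r; last lra.
        by rewrite Rmult_1_r.
      have Hdn : (hdist x y <= n)%N.
        by rewrite /hdist; apply: leq_trans (max_card _) _; rewrite card_ord.
      have R1 := reject_count Hn n yw s Hadv.
      have A1 := reject_arith eps n s t (hdist x y) He Hn H6 Hse1 Hd' Hdn.
      have Cc := coins_card Hn n yw s.
      set T := samp_tester Hn n yw s.
      have Hc : (#|[set r | outcome T (online_oracle adv) r]| +
                 #|[set r | ~~ outcome T (online_oracle adv) r]| = 2 ^ coins T)%N.
        have <- : #|{ffun 'I_(coins T) -> bool}| = (2 ^ coins T)%N.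
          by rewrite card_ffun card_bool card_ord.
        rewrite -(cardsC [set r | outcome T (online_oracle adv) r]).
        congr (_ + _)%N; apply: eq_card => r; by rewrite !inE.
      move: R1 A1 Cc Hc; rewrite -/y -/T.
      move: (#|[set r | outcome T (online_oracle adv) r]|) (#|[set r | ~~ outcome T (online_oracle adv) r]|) => a c.
      move: ((2 ^ n - (hdist x y - s * t) * (2 ^ n %/ n)) ^ s)%N ((2 ^ n) ^ s)%N (2 ^ coins T)%N.
      move=> h m k R1 A1 Cc Hc.
      lia.
  + change (nqueries (samp_tester Hn n yw s)) with s.+1; rewrite S_INR pow_1.
    have : (INR s + 1) * eps <= 10 by lra.
    move=> H; apply: (Rmult_le_reg_r eps); first lra.
    rewrite Rmult_assoc Rinv_l; lra.
- move=> eps He c1 Hc1.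
  have [n0 Hn0] := lower_params eps c1 He Hc1.
  exists 1, 0%N, n0; split; first lra.
  move=> n Hn alpha Ha Hae T HT.
  have [npos [H1 [H2 H3]]] := Hn0 n Hn alpha Ha.
  have Hq := lower_core npos H1 H2 HT.
  rewrite pow_O /Rdiv Rinv_1 Rmult_1_r Rmult_1_l.
  apply: (Rle_trans _ _ _ H3); apply: le_INR; apply/leP.
  by apply: leq_trans Hq; rewrite /kk.
Qed.
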